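(* Let $n\ge 3$ and $i\ge 0$. Then: (a) if $3\cdot 4^i\le n<6\cdot 4^i$, the set $\{2\cdot 4^j-1 : 0\le j\le i\}\cup\{3\cdot 4^i-1\}$, which has cardinality $i+2$, is a string attractor of $\mathbf{p}[0..n-1]$; (b) if $6\cdot 4^i\le n<12\cdot 4^i$, the set $\{4^j-1 : 0\le j\le i+1\}\cup\{6\cdot 4^i-1\}$, which has cardinality $i+3$, is a string attractor of $\mathbf{p}[0..n-1]$.
   Context: $\mathbf{p}=11010001\cdots$ is the infinite binary word, indexed from $0$, with $\mathbf{p}[n]=1$ if $n+1$ is a power of $2$ and $\mathbf{p}[n]=0$ otherwise (so $\mathbf{p}[0]=\mathbf{p}[1]=\mathbf{p}[3]=\mathbf{p}[7]=1$). A string attractor of a finite word $w=w[0..n-1]$ is a set $S\subseteq\{0,\ldots,n-1\}$ such that every nonempty factor $f$ of $w$ has an occurrence $w[p..q]=f$ with $p\le k\le q$ for some $k\in S$. *)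

(* Defs.v *)
From mathcomp Require Import all_boot.
Set Implicit Arguments. Unset Strict Implicit. Unset Printing Implicit Defensive.

Definition pword (m : nat) : bool := [exists k : 'I_(m.+2), m.+1 == 2 ^ k].

Definition factor (w : nat -> bool) (p q : nat) : seq bool :=
  [seq w k | k <- iota p (q - p).+1].

Definition string_attractor (w : nat -> bool) (n : nat) (S : seq nat) : Prop :=
  (forall k, k \in S -> k < n) /\
  forall p q, p <= q -> q < n ->
    exists p' q', [/\ p' <= q', q' < n, factor w p' q' = factor w p q &
                     exists2 k, k \in S & p' <= k <= q'].

(* Main.v *)
Require Import Defs.
From mathcomp Require Import all_boot zify.

Definition occ_ok n (S : seq nat) p q := exists p' q', [/\ p' <= q', q' < n, factor pword p' q' = factor pword p q &
                     exists2 k, k \in S & p' <= k <= q'].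

Lemma pw_pow k : pword (2^k - 1) = true.
Proof.
apply/existsP.
have h1 : 0 < 2^k by rewrite expn_gt0.
have h2 : k < 2^k by apply: ltn_expl.
have h : k < (2^k - 1).+2 by lia.
exists (Ordinal h) => /=. apply/eqP; lia.
Qed.

Lemma pw_gap k m : 2^k - 1 < m < 2^(k.+1) - 1 -> pword m = false.
Proof.
move=> hm; apply/negbTE/existsP => -[[e he] /= /eqP E].
have h1 : 2^k < 2^e by lia.
have h2 : 2^e < 2^k.+1 by lia.
rewrite ltn_exp2l // in h1; rewrite ltn_exp2l // in h2. lia.
Qed.

Lemma pw_mid k m : 2^k - 1 < m < 2^(k.+2) - 1 -> pword m = (m == 2^k.+1 - 1).
Proof.
move=> hm; case: (ltngtP m (2^k.+1 - 1)) => h.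
- rewrite (pw_gap k); [apply/esym/eqP; lia | lia].
- rewrite (pw_gap k.+1); [apply/esym/eqP; lia | lia].
- by rewrite h pw_pow.
Qed.

Lemma factor_eq p q p' : (forall t, t <= q - p -> pword (p'+t) = pword (p+t)) ->
  factor pword p' (p' + (q-p)) = factor pword p q.
Proof.
move=> H; have E a L : iota a L = map (addn a) (iota 0 L) by rewrite -iotaDl addn0.
rewrite /factor addKn (E p') (E p) -!map_comp.
apply/eq_in_map => t; rewrite mem_iota /= => ht; apply: H; lia.
Qed.

Lemma win n S p q p' s : p <= q -> p' + (q - p) < n -> s \in S -> p' <= s <= p' + (q-p) ->
  (forall t, t <= q - p -> pword (p'+t) = pword (p+t)) -> occ_ok n S p q.
Proof.
move=> pq hn hs hs2 H; exists p', (p' + (q-p)); split => //; first lia.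
  exact: factor_eq.
by exists s.
Qed.

Lemma self n S p q s : p <= q -> q < n -> s \in S -> p <= s <= q -> occ_ok n S p q.
Proof. move=> pq qn hs h; apply: (@win n S p q p s) => //; lia. Qed.

Lemma zero_case n S p q A B c : A <= c <= B -> B < n -> c \in S ->
  (forall m, A <= m <= B -> pword m = false) -> (forall m, p <= m <= q -> pword m = false) ->
  p <= q -> q - p <= B - A -> occ_ok n S p q.
Proof.
move=> hc hB cS HA Hp pq hl.
apply: (@win n S p q (maxn A (c - (q-p))) c) => //; try lia.
move=> t ht; rewrite HA ?Hp //; lia.
Qed.

Lemma shift_case n S p q o o' : p <= o <= q -> o - p <= o' -> o' + (q - o) < n -> o' \in S ->
  (forall m, p <= m <= q -> pword m = (m == o)) ->
  (forall m, o' - (o - p) <= m <= o' + (q - o) -> pword m = (m == o')) -> occ_ok n S p q.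
Proof.
move=> ho ho' hn oS H1 H2.
apply: (@win n S p q (o' - (o - p)) o') => //; try lia.
move=> t ht; rewrite (H1 (p+t)) ?(H2 (o' - (o - p) + t)); try lia.
Qed.

Lemma arith_zero M X n p q : 0 < M -> 3*M <= n < 6*M -> p <= q -> q < n -> X - 1 < p -> q.+1 < 2*X ->
  [\/ X <= M, X = 2*M, X = 4*M | 8*M <= X] -> q - p <= minn (4*M-2) (n-1) - 2*M.
Proof. move=> h1 h2 h3 h4 h5 h6 [] h7; lia. Qed.

Lemma caseA e n S p q k : 3 * 2^e <= n < 6 * 2^e ->
  (forall k, k <= e.+1 -> odd k = odd e.+1 -> 2^k - 1 \in S) -> 3 * 2^e - 1 \in S ->
  p <= q -> q < n -> 2^k <= q.+1 -> q.+1 < 2^k.+1 -> p <= 2^k - 1 -> occ_ok n S p q.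
Proof.
move=> hn HS Hc pq qn hk1 hk2 hp.
have M1 : 0 < 2^e by rewrite expn_gt0.
have E1 : 2^e.+1 = 2 * 2^e by rewrite expnS.
have E2 : 2^e.+2 = 4 * 2^e by rewrite !expnS mulnA.
have E3 : 2^e.+3 = 8 * 2^e by rewrite !expnS !mulnA.
have X1 : 0 < 2^k by rewrite expn_gt0.
have F1 : 2^k.+1 = 2 * 2^k by rewrite expnS.
have F2 : 2^k.+2 = 4 * 2^k by rewrite !expnS mulnA.
have hpo : p <= 2^k - 1 <= q by clear - hp hk1; lia.
case: (boolP ((k <= e.+1) && (odd k == odd e.+1))) => [/andP[g1 /eqP g2]|ng].
  by apply: (@self n S p q (2^k-1)) => //; apply: HS.
have [kle|kgt] := leqP k e.
  have Xle : 2^k <= 2^e by apply: leq_pexp2l.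
  have hodd : odd k.+1 = odd e.+1.
    by move: ng; rewrite (leqW kle) /=; case: (odd k); case: (odd e).
  have HS1 : 2^k.+1 - 1 \in S by apply: HS.
  have H2 : forall m, 2^k - 1 < m < 2^k.+2 - 1 -> pword m = (m == 2^k.+1 - 1).
    by move=> m hm; apply: pw_mid.
  have s1 : 2^k - 1 - p <= 2^k.+1 - 1 by clear - F1 X1; lia.
  have s2 : 2^k.+1 - 1 + (q - (2^k - 1)) < n by clear - F1 hk2 Xle hn X1 M1; lia.
  have [k0|kpos] := posnP k.
    apply: (@shift_case n S p q (2^k - 1) (2^k.+1 - 1)) => //.
      move=> m hm; have -> : m = 2^k - 1.
        by rewrite k0 expn1 in hk2; rewrite k0 expn0; clear - hk2 hm; lia.
      by rewrite pw_pow eqxx.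
    move=> m hm; apply: H2; clear - hm F1 F2 X1 hk2 hp; lia.
  have Ek := prednK kpos.
  have G1 : 2^k = 2 * 2^k.-1 by rewrite -{1}Ek expnS.
  have [hp2|hp2] := leqP p (2^k.-1 - 1).
    apply: (@self n S p q (2^k.-1-1)) => //; last by clear - hp2 G1 hk1; lia.
    apply: HS; first by clear - kle; lia.
    by move: hodd; rewrite -Ek /= negbK.
  apply: (@shift_case n S p q (2^k - 1) (2^k.+1 - 1)) => //.
    move=> m hm; have := (@pw_mid k.-1 m); rewrite Ek; apply; clear - hp2 hm hk2; lia.
  move=> m hm; apply: H2; clear - hm F1 F2 X1 hk2 hp; lia.
have ke1 : k != e.+1 by apply: contra ng => /eqP ->; rewrite leqnn eqxx.
have [ke2|ke2] : k = e.+2 \/ e.+3 <= k by clear - kgt ke1; lia.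
  have X4 : 2^k = 4 * 2^e by rewrite ke2.
  have S1 : 2^e.+1 - 1 \in S by apply: HS => //=; rewrite negbK.
  have [hp2|hp2] := leqP p (2 * 2^e - 1).
    by apply: (@self n S p q (2^e.+1-1)) => //; clear - hp2 E1 hk1 X4; lia.
  have [hp3|hp3] := leqP p (3 * 2^e - 1).
    by apply: (@self n S p q (3 * 2^e-1)) => //; clear - hp3 hk1 X4; lia.
  apply: (@shift_case n S p q (2^k - 1) (2^e.+1 - 1)) => //.
  - by clear - hp3 X4 E1 M1; lia.
  - by clear - E1 X4 qn hk1 M1; lia.
  - move=> m hm; have := (@pw_mid e.+1 m); rewrite -ke2; apply; clear - hp2 hm hk2 E1; lia.
  - move=> m hm; have := (@pw_mid e m); apply; clear - hm E1 E2 X4 hp3 qn hn hk1 M1; lia.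
have : 2^e.+3 <= 2^k by apply: leq_pexp2l.
move=> h; clear - h E3 hk1 qn hn M1; lia.
Qed.

Lemma caseB e n S p q k : 3 * 2^e <= n < 6 * 2^e ->
  (forall k, k <= e.+1 -> odd k = odd e.+1 -> 2^k - 1 \in S) -> 3 * 2^e - 1 \in S ->
  p <= q -> q < n -> 2^k <= q.+1 -> q.+1 < 2^k.+1 -> 2^k - 1 < p -> occ_ok n S p q.
Proof.
move=> hn HS Hc pq qn hk1 hk2 hp.
have M1 : 0 < 2^e by rewrite expn_gt0.
have E1 : 2^e.+1 = 2 * 2^e by rewrite expnS.
have E2 : 2^e.+2 = 4 * 2^e by rewrite !expnS mulnA.
apply: (@zero_case n S p q (2 * 2^e) (minn (4 * 2^e - 2) (n - 1)) (3 * 2^e - 1)) => //.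
- by clear - hn M1; lia.
- by clear - hn M1; lia.
- move=> m hm; apply: (pw_gap e.+1); clear - hm E1 E2 M1; lia.
- move=> m hm; apply: (pw_gap k); clear - hm hp hk2; lia.
rewrite expnS in hk2; apply: (@arith_zero (2^e) (2^k) n p q) => //.
have [kle|kgt] := leqP k e.
  by apply: Or41; apply: leq_pexp2l.
have [ke1|ke1] := eqVneq k e.+1.
  by apply: Or42; rewrite ke1 expnS.
have [ke2|ke2] := eqVneq k e.+2.
  by apply: Or43; rewrite ke2 !expnS mulnA.
apply: Or44; rewrite -[8]/(2^3) -expnD; apply: leq_pexp2l => //.
by clear - kgt ke1 ke2; lia.
Qed.

Lemma main e n S : 3 * 2^e <= n < 6 * 2^e ->
  (forall k, k <= e.+1 -> odd k = odd e.+1 -> 2^k - 1 \in S) -> 3 * 2^e - 1 \in S ->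
  forall p q, p <= q -> q < n -> occ_ok n S p q.
Proof.
move=> hn HS Hc p q pq qn.
have [k /andP[hk1 hk2]] : exists k, 2^k <= q.+1 < 2^k.+1.
  exists (trunc_log 2 q.+1); rewrite trunc_logP ?trunc_log_ltn //.
case: (leqP p (2^k - 1)) => hp; [exact: (@caseA e n S p q k) | exact: (@caseB e n S p q k)].
Qed.

Theorem theorem8 (n i : nat) : 3 <= n ->
  ((3 * 4 ^ i <= n < 6 * 4 ^ i ->
    let S := rcons [seq 2 * 4 ^ j - 1 | j <- iota 0 i.+1] (3 * 4 ^ i - 1) in
    size (undup S) = i + 2 /\ string_attractor pword n S) /\
   (6 * 4 ^ i <= n < 12 * 4 ^ i ->
    let S := rcons [seq 4 ^ j - 1 | j <- iota 0 i.+2] (6 * 4 ^ i - 1) in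
    size (undup S) = i + 3 /\ string_attractor pword n S)).
Proof.
move=> h3.
have N1 : 0 < 4^i by rewrite expn_gt0.
have N4 : 2^(2*i) = 4^i by rewrite expnM.
have P4 : forall j, j <= i -> 4^j <= 4^i by move=> j hj; apply: leq_pexp2l.
have P4' : forall j, j <= i.+1 -> 4^j <= 4 * 4^i by move=> j hj; rewrite -expnS; apply: leq_pexp2l.
have G4 : forall j, 0 < 4^j by move=> j; rewrite expn_gt0.
have inj4 : forall a b, 4^a = 4^b -> a = b by move=> a b; apply: expnI.
split.
- move=> hn S; rewrite /S.
  split.
  + rewrite undup_id ?size_rcons ?size_map ?size_iota; first by rewrite addn2.
    rewrite rcons_uniq map_inj_in_uniq ?iota_uniq ?andbT.
      apply/mapP => -[j]; rewrite mem_iota => hj E.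
      have hj' : j <= i by clear - hj; lia.
      move: (P4 j hj') (G4 j) => a b; clear - a b E N1; lia.
    move=> a b _ _ E; apply: inj4; move: (G4 a) (G4 b) => x y; clear - x y E; lia.
  split.
  + move=> k; rewrite mem_rcons in_cons => /orP[/eqP->|/mapP[j]]; first by clear - hn N1; lia.
    rewrite mem_iota => hj ->.
    have hj' : j <= i by clear - hj; lia.
    move: (P4 j hj') => a; clear - a hn; lia.
  + move=> p q pq qn; apply: (@main (2*i)) => //.
    * by rewrite N4.
    * move=> k hk hodd.
      have ok : odd k by rewrite hodd /= oddM.
      have hkj : k = (2 * k./2).+1.
        have := odd_double_half k; rewrite ok -mul2n; move: (k./2) => z h; clear - h; lia.
      rewrite mem_rcons in_cons; apply/orP; right; apply/mapP; exists k./2.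
        rewrite mem_iota; move: (k./2) hkj => z h; clear - h hk; lia.
      by rewrite {1}hkj expnS expnM.
    * by rewrite N4 mem_rcons mem_head.
- move=> hn S; rewrite /S.
  split.
  + rewrite undup_id ?size_rcons ?size_map ?size_iota; first by rewrite addn3.
    rewrite rcons_uniq map_inj_in_uniq ?iota_uniq ?andbT.
      apply/mapP => -[j]; rewrite mem_iota => hj E.
      have hj' : j <= i.+1 by clear - hj; lia.
      move: (P4' j hj') (G4 j) => a b; clear - a b E N1; lia.
    move=> a b _ _ E; apply: inj4; move: (G4 a) (G4 b) => x y; clear - x y E; lia.
  split.
  + move=> k; rewrite mem_rcons in_cons => /orP[/eqP->|/mapP[j]]; first by clear - hn N1; lia.
    rewrite mem_iota => hj ->.
    have hj' : j <= i.+1 by clear - hj; lia.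
    move: (P4' j hj') => a; clear - a hn; lia.
  + move=> p q pq qn; apply: (@main (2*i).+1) => //.
    * by rewrite expnS N4 !mulnA.
    * move=> k hk hodd.
      have ok : odd k = false by rewrite hodd /= oddM.
      have hkj : k = 2 * k./2.
        have := odd_double_half k; rewrite ok -mul2n; move: (k./2) => z h; clear - h; lia.
      rewrite mem_rcons in_cons; apply/orP; right; apply/mapP; exists k./2.
        rewrite mem_iota; move: (k./2) hkj => z h; clear - h hk; lia.
      by rewrite {1}hkj expnM.
    * have -> : 3 * 2 ^ (2 * i).+1 - 1 = 6 * 4^i - 1 by rewrite expnS N4 mulnA.
      by rewrite mem_rcons mem_head.
Qed.
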